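(* Let $M$ be a closed surface with a triangulation $\mathcal{T}=(V,E,F)$, $V=\{v_1,\dots,v_N\}$, and let $\Phi:E\to[0,\pi)$ be a weight satisfying condition $\langle\star\rangle$ (see context). Let $R>0$ be a constant. Then there exist positive constants $a_1(\Phi,R)$, $a_2(\Phi,R)$, $a_3(\Phi,R)$, depending only on $\Phi$ and $R$, such that for every hyperbolic circle packing metric $r=(r_1,\dots,r_N)\in\mathbb{R}_{>0}^N$ with $r_i\ge R$ for all $v_i\in V$, one has $a_1\le A_i\le a_2$ for every vertex $v_i$, and $0\le B_{ij}\le a_3$ for all adjacent vertices $v_i,v_j$.
   Context: Weights: write $\Phi_{ij}=\Phi(e_{ij})$ and $I_{ij}=\cos\Phi_{ij}$. Condition $\langle\star\rangle$: for every face $\triangle_{ijk}\in F$, $I_{ij}+I_{ik}I_{jk}\ge0$, $I_{ik}+I_{ij}I_{jk}\ge0$, $I_{jk}+I_{ij}I_{ik}\ge0$. A circle packing metric is $r:V\to(0,\infty)$, $r_i=r(v_i)$ (radius of a circle centered at $v_i$). In hyperbolic background geometry the edge $e_{ij}$ gets length $l_{ij}=\cosh^{-1}(\cosh r_i\cosh r_j+\sinh r_i\sinh r_j\cos\Phi_{ij})$; under $\langle\star\rangle$ the three lengths of each face satisfy the triangle inequalities, so each face $\triangle_{ijk}$ is realized as a hyperbolic triangle; $\theta_i^{jk}\in(0,\pi)$ denotes its inner angle at $v_i$. Set $u_i=\ln\tanh(r_i/2)$ (a diffeomorphism $\mathbb{R}^N_{>0}\to\mathbb{R}^N_{<0}$)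 and regard angles and areas as functions of $u=(u_1,\dots,u_N)$. For an edge $e_{ij}$ with adjacent faces $\triangle_{ijk},\triangle_{ijl}$, define $B_{ij}=\frac{\partial\theta_i^{jk}}{\partial u_j}+\frac{\partial\theta_i^{jl}}{\partial u_j}$, and for a vertex $v_i$ define $A_i=\frac{\partial}{\partial u_i}\Big(\sum_{\triangle_{ijk}\in F}\mathrm{Area}(\triangle_{ijk})\Big)$, the sum over all faces containing $v_i$ (hyperbolic areas). *)

(* Defs.v *)
From Stdlib Require Import Reals.
From Coquelicot Require Import Coquelicot.
From mathcomp Require Import ssreflect ssrfun ssrbool eqtype ssrnat seq choice
  fintype finset bigop fingraph.

Set Implicit Arguments. Unset Strict Implicit. Unset Printing Implicit Defensive.

Local Open Scope R_scope.

(* F is the set of faces (simplicial triangulation).                         *)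

Definition adjacent (N : nat) (F : {set {set 'I_N}}) (i j : 'I_N) : bool :=
  (i != j) && [exists k : 'I_N, [set i; j; k] \in F].

Definition link_rel (N : nat) (F : {set {set 'I_N}}) (v : 'I_N) : rel 'I_N :=
  fun a b => [&& a != v, b != v, a != b & [set v; a; b] \in F].

Record closed_surface_triangulation (N : nat) (F : {set {set 'I_N}}) : Prop := {
  tri_card3 : forall f, f \in F -> #|f| = 3%nat;
  tri_cover : forall v : 'I_N, exists2 f, f \in F & v \in f;
  (* no boundary: every edge lies in exactly two faces *)
  tri_edge2 : forall i j : 'I_N, adjacent F i j ->
                #|[set f in F | (i \in f) && (j \in f)]| = 2%nat;
  (* the link of every vertex is connected (so it is a single cycle, and the
     star of each vertex is a disk) *)
  tri_link : forall v a b : 'I_N, adjacent F v a -> adjacent F v b ->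
               connect (link_rel F v) a b;
  tri_conn : forall a b : 'I_N, connect (adjacent F) a b
}.

(* Phi is given on ordered pairs; it must be symmetric with values in [0,pi)
   on edges, Phi_ij = Phi(e_ij). *)
Definition is_weight (N : nat) (F : {set {set 'I_N}}) (Phi : 'I_N -> 'I_N -> R) : Prop :=
  forall i j, adjacent F i j -> Phi i j = Phi j i /\ 0 <= Phi i j < PI.

(* condition <star>: for every face {i,j,k},
   I_ij + I_ik I_jk >= 0 (the three inequalities of the paper are the
   instances of this one under relabelling of the face) *)
Definition star_condition (N : nat) (F : {set {set 'I_N}}) (Phi : 'I_N -> 'I_N -> R) : Prop :=
  forall i j k : 'I_N, [set i; j; k] \in F -> #|[set i; j; k]| = 3%nat ->
    cos (Phi i j) + cos (Phi i k) * cos (Phi j k) >= 0.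

Definition arcosh (x : R) : R := ln (x + sqrt (x * x - 1)).

Definition hlen (N : nat) (Phi : 'I_N -> 'I_N -> R) (r : 'I_N -> R) (i j : 'I_N) : R :=
  arcosh (cosh (r i) * cosh (r j) + sinh (r i) * sinh (r j) * cos (Phi i j)).

(* inner angle theta_i^{jk} at v_i of the hyperbolic triangle with side
   lengths l_ij, l_ik, l_jk (hyperbolic law of cosines) *)
Definition hangle (N : nat) (Phi : 'I_N -> 'I_N -> R) (r : 'I_N -> R) (i j k : 'I_N) : R :=
  let a := hlen Phi r i j in
  let b := hlen Phi r i k in
  let c := hlen Phi r j k in
  acos ((cosh a * cosh b - cosh c) / (sinh a * sinh b)).

(* hyperbolic area of the triangle {i,j,k} (Gauss-Bonnet) *)
Definition harea (N : nat) (Phi : 'I_N -> 'I_N -> R) (r : 'I_N -> R) (i j k : 'I_N) : R :=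
  PI - hangle Phi r i j k - hangle Phi r j i k - hangle Phi r k i j.

Definition u_of_r (N : nat) (r : 'I_N -> R) : 'I_N -> R :=
  fun i => ln (tanh (r i / 2)).
Definition r_of_u (N : nat) (u : 'I_N -> R) : 'I_N -> R :=
  fun i => ln ((1 + exp (u i)) / (1 - exp (u i))).

Definition upd (N : nat) (u : 'I_N -> R) (j : 'I_N) (t : R) : 'I_N -> R :=
  fun k => if k == j then t else u k.

Definition pderiv (N : nat) (g : ('I_N -> R) -> R) (u : 'I_N -> R) (j : 'I_N) : R :=
  Derive (fun t => g (upd u j t)) (u j).

Definition Bcoef (N : nat) (F : {set {set 'I_N}}) (Phi : 'I_N -> 'I_N -> R)
    (u : 'I_N -> R) (i j : 'I_N) : R :=
  \big[Rplus/0]_(k : 'I_N | [set i; j; k] \in F)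
     pderiv (fun w => hangle Phi (r_of_u w) i j k) u j.

(* total area of the faces containing v_i; each face {i,j,k} counted once
   via j < k *)
Definition star_area (N : nat) (F : {set {set 'I_N}}) (Phi : 'I_N -> 'I_N -> R)
    (r : 'I_N -> R) (i : 'I_N) : R :=
  \big[Rplus/0]_(j : 'I_N)
    \big[Rplus/0]_(k : 'I_N | ((j < k)%nat) && ([set i; j; k] \in F))
       harea Phi r i j k.

Definition Acoef (N : nat) (F : {set {set 'I_N}}) (Phi : 'I_N -> 'I_N -> R)
    (u : 'I_N -> R) (i : 'I_N) : R :=
  pderiv (fun w => star_area F Phi (r_of_u w) i) u i.

(* Main.v *)
From HB Require Import structures.
Require Import Defs.
From Stdlib Require Import Reals Lra Psatz.
From Coquelicot Require Import Coquelicot.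
From mathcomp Require Import ssreflect ssrfun ssrbool eqtype ssrnat seq choice
  fintype finset bigop fingraph.
Local Open Scope R_scope.

Lemma is_derive_eq (f : R -> R) (x l l' : R) : is_derive f x l -> l = l' -> is_derive f x l'.
Proof. by intros H <-. Qed.

Lemma cosh_sinh_sq x : cosh x * cosh x = 1 + sinh x * sinh x.
Proof. unfold cosh, sinh. rewrite exp_Ropp. field. apply Rgt_not_eq, exp_pos. Qed.

Lemma cosh_pos' x : 0 < cosh x.
Proof. unfold cosh. pose proof (exp_pos x). pose proof (exp_pos (-x)). lra. Qed.

Lemma sinh_pos' x : 0 < x -> 0 < sinh x.
Proof. intro H. rewrite <- sinh_0. now apply sinh_lt. Qed.

Lemma cosh_ge_sinh x : sinh x <= cosh x.
Proof. unfold cosh, sinh. pose proof (exp_pos (-x)). lra. Qed.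

Lemma cosh_le_sinh1 x : 0 <= x -> cosh x <= sinh x + 1.
Proof. intro H. unfold cosh, sinh. assert (exp (-x) <= 1).
 { rewrite <- exp_0. destruct (Req_dec x 0). subst; rewrite Ropp_0; lra. left; apply exp_increasing; lra. }
 lra. Qed.

Lemma hs_param x : exists e, 0 < e /\ cosh x = (e + /e)/2 /\ sinh x = (e - /e)/2.
Proof. exists (exp x). split. apply exp_pos. unfold cosh, sinh. rewrite exp_Ropp. auto. Qed.

Definition arcosh_ok := tt.

Lemma cosh_arcosh X : 1 <= X -> cosh (arcosh X) = X.
Proof. intro H. unfold arcosh, cosh.
 set S := sqrt (X*X-1). assert (HS : S*S = X*X-1) by (apply sqrt_sqrt; nra).
 assert (0 <= S) by apply sqrt_pos.
 assert (Hp : 0 < X + S) by lra.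
 rewrite exp_Ropp exp_ln //. field_simplify_eq. 2: lra. nra. Qed.

Lemma sinh_arcosh X : 1 <= X -> sinh (arcosh X) = sqrt (X*X-1).
Proof. intro H. unfold arcosh, sinh.
 set S := sqrt (X*X-1). assert (HS : S*S = X*X-1) by (apply sqrt_sqrt; nra).
 assert (0 <= S) by apply sqrt_pos.
 assert (Hp : 0 < X + S) by lra.
 rewrite exp_Ropp exp_ln //. field_simplify_eq. 2: lra. nra. Qed.

Definition Cf (X Y Z : R) := (X*Y - Z) / (sqrt (X*X-1) * sqrt (Y*Y-1)).
Definition Df (X Y Z : R) := 1 - X*X - Y*Y - Z*Z + 2*X*Y*Z.

Lemma is_derive_acos c : -1 < c < 1 -> is_derive acos c (-1 / sqrt (1 - c²)).
Proof. intro H. apply is_derive_Reals. rewrite <- (derive_pt_acos c H).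
 apply derive_pt_eq_1 with (pr := derivable_pt_acos c H). reflexivity. Qed.

Lemma is_derive_angle (X Y Z : R -> R) x dX dY dZ :
  is_derive X x dX -> is_derive Y x dY -> is_derive Z x dZ ->
  1 < X x -> 1 < Y x -> 0 < Df (X x) (Y x) (Z x) ->
  is_derive (fun t => acos (Cf (X t) (Y t) (Z t))) x
   (- (dX * Y x + X x * dY - dZ - (X x * Y x - Z x) * (X x * dX / (X x * X x - 1) + Y x * dY / (Y x * Y x - 1))) / sqrt (Df (X x) (Y x) (Z x))).
Proof.
 intros HX HY HZ H1 H2 H3.
 set p := sqrt (X x * X x - 1). set q := sqrt (Y x * Y x - 1). set sD := sqrt (Df (X x) (Y x) (Z x)).
 assert (Hp2 : p * p = X x * X x - 1) by (apply sqrt_sqrt; nra).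
 assert (Hq2 : q * q = Y x * Y x - 1) by (apply sqrt_sqrt; nra).
 assert (HD2 : sD * sD = Df (X x) (Y x) (Z x)) by (apply sqrt_sqrt; nra).
 assert (Hp : 0 < p) by (apply sqrt_lt_R0; nra).
 assert (Hq : 0 < q) by (apply sqrt_lt_R0; nra).
 assert (HsD : 0 < sD) by (apply sqrt_lt_R0; nra).
 set c := Cf (X x) (Y x) (Z x).
 assert (Hc : c = (X x * Y x - Z x) / (p * q)) by reflexivity.
 assert (H1c : 1 - c² = (sD / (p*q))²).
 { rewrite Hc /Rsqr. field_simplify_eq. 2: split; lra.
   replace (sD^2) with (sD*sD) by ring. replace (p^2) with (p*p) by ring. replace (q^2) with (q*q) by ring.
   rewrite HD2 Hp2 Hq2 /Df. ring. }
 assert (Hcb : -1 < c < 1).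
 { assert (0 < (sD/(p*q))²). { apply Rlt_0_sqr. apply Rgt_not_eq. apply Rdiv_lt_0_compat; nra. }
   assert (c² < 1) by lra. unfold Rsqr in *. nra. }
 assert (Hs1 : sqrt (1 - c²) = sD / (p*q)).
 { rewrite H1c. apply sqrt_Rsqr. apply Rlt_le, Rdiv_lt_0_compat; nra. }
 have Hcomm : forall n m : R_AbsRing, mult n m = mult m n by intros; apply Rmult_comm.
 have HXX := is_derive_minus _ _ _ _ _ (is_derive_mult _ _ _ _ _ HX HX Hcomm) (is_derive_const (1:R) x).
 have HYY := is_derive_minus _ _ _ _ _ (is_derive_mult _ _ _ _ _ HY HY Hcomm) (is_derive_const (1:R) x).
 have HXX' : is_derive (fun t => X t * X t - 1) x (dX * X x + X x * dX).
 { eapply is_derive_eq. eapply is_derive_ext. 2: exact HXX. intros; reflexivity.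
   rewrite /minus /plus /opp /mult /zero /=. ring. }
 have HYY' : is_derive (fun t => Y t * Y t - 1) x (dY * Y x + Y x * dY).
 { eapply is_derive_eq. eapply is_derive_ext. 2: exact HYY. intros; reflexivity.
   rewrite /minus /plus /opp /mult /zero /=. ring. }
 have Hsp := is_derive_sqrt _ _ _ HXX' ltac:(nra).
 have Hsq := is_derive_sqrt _ _ _ HYY' ltac:(nra).
 have Hden0 := is_derive_mult _ _ _ _ _ Hsp Hsq Hcomm.
 have Hden : is_derive (fun t => sqrt (X t * X t - 1) * sqrt (Y t * Y t - 1)) x
     ((dX * X x + X x * dX) / (2 * p) * q + p * ((dY * Y x + Y x * dY) / (2 * q))).
 { eapply is_derive_eq. eapply is_derive_ext. 2: exact Hden0. intros; reflexivity.
   rewrite /mult /plus /=. reflexivity. }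
 have Hnum0 := is_derive_minus _ _ _ _ _ (is_derive_mult _ _ _ _ _ HX HY Hcomm) HZ.
 have Hnum : is_derive (fun t => X t * Y t - Z t) x (dX * Y x + X x * dY - dZ).
 { eapply is_derive_eq. eapply is_derive_ext. 2: exact Hnum0. intros; reflexivity.
   rewrite /minus /plus /opp /mult /=. ring. }
 have HC := is_derive_div _ _ _ _ _ Hnum Hden ltac:(apply Rgt_not_eq; fold p q; nra).
 have HC' : is_derive (fun t => Cf (X t) (Y t) (Z t)) x
    (((dX * Y x + X x * dY - dZ) * (p * q) - (X x * Y x - Z x) *
      ((dX * X x + X x * dX) / (2 * p) * q + p * ((dY * Y x + Y x * dY) / (2 * q)))) / (p * q) ^ 2)
   by exact HC.
 have HA := is_derive_comp acos (fun t => Cf (X t) (Y t) (Z t)) x _ _ (is_derive_acos c Hcb) HC'.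
 eapply is_derive_eq. exact HA.
 rewrite /scal /= /mult /=. fold p q c. rewrite Hs1.
 rewrite -Hp2 -Hq2. field. repeat split; lra.
Qed.

Lemma is_derive_ext_eq (f g : R -> R) (x l l' : R) : (forall t, f t = g t) -> is_derive f x l -> l = l' -> is_derive g x l'.
Proof. intros H1 H2 <-. eapply is_derive_ext. exact H1. exact H2. Qed.

Definition Xf (x y a : R) := cosh x * cosh y + sinh x * sinh y * a.
Definition angf x y z a b c := acos (Cf (Xf x y a) (Xf x z b) (Xf y z c)).

Lemma hh_ge x y : 1 + sinh x * sinh y <= cosh x * cosh y /\ 1 - sinh x * sinh y <= cosh x * cosh y.
Proof.
 have Hx := cosh_sinh_sq x. have Hy := cosh_sinh_sq y.
 have px := cosh_pos' x. have py := cosh_pos' y.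
 set hx := cosh x in Hx px *. set hy := cosh y in Hy py *.
 set sx := sinh x in Hx *. set sy := sinh y in Hy *.
 assert (E : (hx*hy)*(hx*hy) = 1 + sx*sx + sy*sy + (sx*sy)*(sx*sy)) by (transitivity ((hx*hx)*(hy*hy)); [ring| rewrite Hx Hy; ring]).
 have Q0 : 0 < hx*hy by nra.
 set Q := hx*hy in E Q0 *.
 split.
 - destruct (Rle_dec (1 + sx*sy) Q) as [h|n]; [exact h|]. apply Rnot_le_lt in n.
   have: Q*Q < (1+sx*sy)*(1+sx*sy) by (apply Rmult_le_0_lt_compat; lra). have := Rle_0_sqr (sx - sy). rewrite /Rsqr. nra.
 - destruct (Rle_dec (1 - sx*sy) Q) as [h|n]; [exact h|]. apply Rnot_le_lt in n.
   have: Q*Q < (1-sx*sy)*(1-sx*sy) by (apply Rmult_le_0_lt_compat; lra). have := Rle_0_sqr (sx + sy). rewrite /Rsqr. nra.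
Qed.

Lemma Xf_ge1 x y a : -1 <= a <= 1 -> 1 <= Xf x y a.
Proof. intros Ha. have [H1 H2] := hh_ge x y. unfold Xf.
 set P := sinh x * sinh y in H1 H2 *. replace (sinh x * sinh y * a) with (P*a) by (unfold P; ring).
 destruct (Rle_dec 0 P); nra. Qed.

Lemma Xf_gt1 x y a : 0 < x -> 0 < y -> -1 < a <= 1 -> (1 + a) * (sinh x * sinh y) <= Xf x y a - 1.
Proof. intros Hx Hy Ha. have [H1 H2] := hh_ge x y. unfold Xf. nra. Qed.

Lemma Xf_sym x y a : Xf x y a = Xf y x a.
Proof. unfold Xf; ring. Qed.

Lemma hangle_angf N (Phi : 'I_N -> 'I_N -> R) r i j k :
  hangle Phi r i j k = angf (r i) (r j) (r k) (cos (Phi i j)) (cos (Phi i k)) (cos (Phi j k)).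
Proof.
 unfold hangle, hlen, angf, Cf.
 change (cosh (r i) * cosh (r j) + sinh (r i) * sinh (r j) * cos (Phi i j)) with (Xf (r i) (r j) (cos (Phi i j))).
 change (cosh (r i) * cosh (r k) + sinh (r i) * sinh (r k) * cos (Phi i k)) with (Xf (r i) (r k) (cos (Phi i k))).
 change (cosh (r j) * cosh (r k) + sinh (r j) * sinh (r k) * cos (Phi j k)) with (Xf (r j) (r k) (cos (Phi j k))).
 rewrite !cosh_arcosh ?sinh_arcosh //; apply Xf_ge1; apply COS_bound.
Qed.

Lemma is_derive_cosh x : is_derive cosh x (sinh x).
Proof. apply is_derive_Reals, derivable_pt_lim_cosh. Qed.
Lemma is_derive_sinh x : is_derive sinh x (cosh x).
Proof. apply is_derive_Reals, derivable_pt_lim_sinh. Qed.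

Lemma is_derive_Xf2 x y a : is_derive (fun t => Xf x t a) y (cosh x * sinh y + sinh x * cosh y * a).
Proof.
 have H1 := is_derive_scal _ _ (cosh x) _ (is_derive_cosh y).
 have H2 := is_derive_scal _ _ (sinh x * a) _ (is_derive_sinh y).
 have H := is_derive_plus _ _ _ _ _ H1 H2.
 eapply is_derive_eq. eapply is_derive_ext. 2: exact H. intros; rewrite /plus /= /Xf; ring.
 rewrite /plus /=; ring.
Qed.

Lemma is_derive_Xf1 x y a : is_derive (fun t => Xf t y a) x (sinh x * cosh y + cosh x * sinh y * a).
Proof.
 apply (is_derive_ext_eq (fun t => Xf y t a) _ x _ _ (fun t => Xf_sym y t a) (is_derive_Xf2 y x a)). ring.
Qed.

Definition Dang x y z a b c := Df (Xf x y a) (Xf x z b) (Xf y z c).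

Lemma is_derive_angf2 x y z a b c :
  1 < Xf x y a -> 1 < Xf x z b -> 0 < Dang x y z a b c ->
  is_derive (fun t => angf x t z a b c) y
   (- ((cosh x * sinh y + sinh x * cosh y * a) * Xf x z b - (sinh y * cosh z + cosh y * sinh z * c)
       - (Xf x y a * Xf x z b - Xf y z c) * (Xf x y a * (cosh x * sinh y + sinh x * cosh y * a) / (Xf x y a * Xf x y a - 1)))
     / sqrt (Dang x y z a b c)).
Proof.
 intros H1 H2 H3.
 have HZ := is_derive_Xf1 y z c.
 have H := is_derive_angle (fun t => Xf x t a) (fun _ => Xf x z b) (fun t => Xf t z c) y _ _ _
   (is_derive_Xf2 x y a) (is_derive_const _ y) HZ H1 H2 H3.
 have P1 : 0 < Xf x y a * Xf x y a - 1 by nra.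
 have P2 : 0 < Xf x z b * Xf x z b - 1 by nra.
 have P3 : 0 < sqrt (Dang x y z a b c) by apply sqrt_lt_R0.
 eapply is_derive_eq. exact H. rewrite /zero /=. unfold Dang in *. field. repeat split; lra.
Qed.

Lemma is_derive_angf1 x y z a b c :
  1 < Xf x y a -> 1 < Xf x z b -> 0 < Dang x y z a b c ->
  is_derive (fun t => angf t y z a b c) x
   (- ((sinh x * cosh y + cosh x * sinh y * a) * Xf x z b + Xf x y a * (sinh x * cosh z + cosh x * sinh z * b)
       - (Xf x y a * Xf x z b - Xf y z c) * (Xf x y a * (sinh x * cosh y + cosh x * sinh y * a) / (Xf x y a * Xf x y a - 1)
           + Xf x z b * (sinh x * cosh z + cosh x * sinh z * b) / (Xf x z b * Xf x z b - 1)))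
     / sqrt (Dang x y z a b c)).
Proof.
 intros H1 H2 H3.
 have H := is_derive_angle (fun t => Xf t y a) (fun t => Xf t z b) (fun _ => Xf y z c) x _ _ _
   (is_derive_Xf1 x y a) (is_derive_Xf1 x z b) (is_derive_const _ x) H1 H2 H3.
 have P1 : 0 < Xf x y a * Xf x y a - 1 by nra.
 have P2 : 0 < Xf x z b * Xf x z b - 1 by nra.
 have P3 : 0 < sqrt (Dang x y z a b c) by apply sqrt_lt_R0.
 eapply is_derive_eq. exact H. rewrite /zero /=. unfold Dang in *. field. repeat split; lra.
Qed.

Definition r1 (t : R) := ln ((1 + exp t) / (1 - exp t)).

Lemma is_derive_r1 t : t < 0 -> is_derive r1 t (sinh (r1 t)).
Proof.
 intro Ht. have He : exp t < 1 by (rewrite <- exp_0; apply exp_increasing; lra).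
 have He0 := exp_pos t.
 unfold r1. auto_derive.
 - split; [lra|split; [|exact I]]. apply Rmult_lt_0_compat; [lra|apply Rinv_0_lt_compat; lra].
 - unfold sinh. rewrite exp_Ropp exp_ln. 2: apply Rdiv_lt_0_compat; lra.
   field. split; lra.
Qed.

Lemma r1_pos t : t < 0 -> 0 < r1 t.
Proof. intro Ht. have He : exp t < 1 by (rewrite <- exp_0; apply exp_increasing; lra).
 have He0 := exp_pos t. unfold r1. rewrite <- ln_1. apply ln_increasing. lra.
 apply (Rmult_lt_reg_r (1 - exp t)). lra. field_simplify; lra. Qed.

Lemma u_of_r_neg x : 0 < x -> ln (tanh (x/2)) < 0.
Proof. intro Hx. unfold tanh, sinh, cosh.
 have A := exp_pos (x/2). have B := exp_pos (-(x/2)).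
 have C : exp (-(x/2)) < exp (x/2) by (apply exp_increasing; lra).
 rewrite <- ln_1. apply ln_increasing. apply Rdiv_lt_0_compat; lra.
 apply (Rmult_lt_reg_r ((exp (x / 2) + exp (- (x / 2))) / 2)). lra. field_simplify; lra. Qed.

Lemma r1_u x : 0 < x -> r1 (ln (tanh (x/2))) = x.
Proof. intro Hx. have Hn := u_of_r_neg x Hx. unfold r1.
 have Hp : 0 < tanh (x/2).
 { unfold tanh, sinh, cosh. have A := exp_pos (x/2). have B := exp_pos (-(x/2)).
   have C : exp (-(x/2)) < exp (x/2) by (apply exp_increasing; lra). apply Rdiv_lt_0_compat; lra. }
 rewrite exp_ln //. unfold tanh, sinh, cosh. rewrite exp_Ropp.
 have A := exp_pos (x/2).
 replace ((1 + (exp (x / 2) - / exp (x / 2)) / 2 / ((exp (x / 2) + / exp (x / 2)) / 2)) /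
   (1 - (exp (x / 2) - / exp (x / 2)) / 2 / ((exp (x / 2) + / exp (x / 2)) / 2))) with (exp (x/2) * exp (x/2)).
 rewrite -exp_plus. replace (x/2 + x/2) with x by field. apply ln_exp.
 field. repeat split; nra.
Qed.

Definition Mf x y z a b c :=
  sinh x * sinh y * cosh z * (1 - a*a) + sinh x * cosh y * sinh z * (c + a*b) + cosh x * sinh y * sinh z * (b + a*c).

Ltac param x := let e := fresh "e" in let He := fresh "He" in let H1 := fresh "H" in let H2 := fresh "H" in
  destruct (hs_param x) as [e [He [H1 H2]]]; rewrite H1 H2; clear H1 H2.

Lemma PB x y z a b c :
  let X := Xf x y a in let Y := Xf x z b in let Z := Xf y z c in
  (sinh y * cosh z + cosh y * sinh z * c) * (X*X-1) - (cosh x * sinh y + sinh x * cosh y * a) * (X*Z - Y)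
  = sinh x * Mf x y z a b c.
Proof. intros X Y Z. unfold X, Y, Z, Xf, Mf. param x. param y. param z. field. lra. Qed.

Lemma PD x y z a b c :
  let X := Xf x y a in let Y := Xf x z b in let Z := Xf y z c in
  let X' := sinh x * cosh y + cosh x * sinh y * a in let Y' := sinh x * cosh z + cosh x * sinh z * b in
  let M := Mf x y z a b c in let M' := Mf x z y b a c in
  (X'*Y + X*Y')*(X*X-1)*(Y*Y-1) - (X*Y-Z)*(X*X'*(Y*Y-1) + Y*Y'*(X*X-1)) - sinh y*M*(Y*Y-1) - sinh z*M'*(X*X-1)
  = sinh y*M*(X-1)*(Y*Y-1) + sinh z*M'*(Y-1)*(X*X-1).
Proof. intros X Y Z X' Y' M M'. unfold X, Y, Z, X', Y', M, M', Xf, Mf. param x. param y. param z. field. lra. Qed.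

Lemma PDelta x y z a b c :
  Dang x y z a b c =
    sinh y^2*sinh z^2*(1-c*c) + sinh x^2*sinh z^2*(1-b*b) + sinh x^2*sinh y^2*(1-a*a)
  + 2*sinh x^2*sinh y^2*sinh z^2*(1+a*b*c)
  + 2*sinh x^2*cosh y*sinh y*cosh z*sinh z*(c+a*b)
  + 2*cosh x*sinh x*sinh y^2*cosh z*sinh z*(b+a*c)
  + 2*cosh x*sinh x*cosh y*sinh y*sinh z^2*(a+b*c).
Proof. unfold Dang, Df, Xf. param x. param y. param z. field. lra. Qed.

Lemma Mf_sym x y z a b c : Mf y x z a c b = Mf x y z a b c.
Proof. unfold Mf; ring. Qed.

Lemma is_derive_angf2' x y z a b c :
  1 < Xf x y a -> 1 < Xf x z b -> 0 < Dang x y z a b c ->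
  is_derive (fun t => angf x t z a b c) y
    (sinh x * Mf x y z a b c / ((Xf x y a * Xf x y a - 1) * sqrt (Dang x y z a b c))).
Proof.
 intros H1 H2 H3. eapply is_derive_eq. apply is_derive_angf2; auto.
 have P1 : 0 < Xf x y a * Xf x y a - 1 by nra.
 have P3 : 0 < sqrt (Dang x y z a b c) by apply sqrt_lt_R0.
 rewrite -(PB x y z a b c).
 field. lra.
Qed.

Lemma Dang_sym1 x y z a b c : Dang y x z a c b = Dang x y z a b c.
Proof. unfold Dang, Df. rewrite (Xf_sym y x a). ring. Qed.
Lemma Dang_sym2 x y z a b c : Dang z x y b c a = Dang x y z a b c.
Proof. unfold Dang, Df. rewrite (Xf_sym z x b) (Xf_sym z y c). ring. Qed.

Lemma area_deriv x y z a b c :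
  1 < Xf x y a -> 1 < Xf x z b -> 1 < Xf y z c -> 0 < Dang x y z a b c ->
  is_derive (fun t => PI - angf t y z a b c - angf y t z a c b - angf z t y b c a) x
   ((sinh y * Mf x y z a b c / (Xf x y a + 1) + sinh z * Mf x z y b a c / (Xf x z b + 1)) / sqrt (Dang x y z a b c)).
Proof.
 intros H1 H2 H3 H4.
 have HO := is_derive_angf1 x y z a b c H1 H2 H4.
 have HB1 := is_derive_angf2' y x z a c b ltac:(by rewrite Xf_sym) H3 ltac:(by rewrite Dang_sym1).
 have HB2 := is_derive_angf2' z x y b c a ltac:(by rewrite Xf_sym) ltac:(by rewrite Xf_sym) ltac:(by rewrite Dang_sym2).
 have H := is_derive_minus _ _ _ _ _ (is_derive_minus _ _ _ _ _ (is_derive_minus _ _ _ _ _ (is_derive_const PI x) HO) HB1) HB2.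
 eapply is_derive_ext_eq. 2: exact H. intros; rewrite /minus /plus /opp /=; ring.
 rewrite /minus /plus /opp /zero /=.
 rewrite (Dang_sym1 x y z a b c) (Dang_sym2 x y z a b c) (Xf_sym y x a) (Xf_sym z x b) (Mf_sym x y z a b c) (Mf_sym x z y b a c).
 have E := PD x y z a b c. simpl in E.
 have P1 : 0 < Xf x y a * Xf x y a - 1 by nra.
 have P2 : 0 < Xf x z b * Xf x z b - 1 by nra.
 have P3 : 0 < sqrt (Dang x y z a b c) by apply sqrt_lt_R0.
 move: E P1 P2 P3.
 set X := Xf x y a. set Y := Xf x z b. set Z := Xf y z c.
 set X' := sinh x * cosh y + cosh x * sinh y * a. set Y' := sinh x * cosh z + cosh x * sinh z * b.
 set M := Mf x y z a b c. set M' := Mf x z y b a c. set sD := sqrt (Dang x y z a b c).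
 set sy := sinh y. set sz := sinh z.
 intros E P1 P2 P3.
 transitivity (((X'*Y + X*Y')*(X*X-1)*(Y*Y-1) - (X*Y-Z)*(X*X'*(Y*Y-1) + Y*Y'*(X*X-1)) - sy*M*(Y*Y-1) - sz*M'*(X*X-1)) / ((X*X-1)*(Y*Y-1)*sD)).
 { field. repeat split; lra. }
 rewrite E. field. repeat split; nra.
Qed.

Definition sig R0 := sinh R0.
Definition kap R0 := 1 + / sinh R0.

Lemma rad_facts R0 x : 0 < R0 -> R0 <= x ->
  0 < sig R0 /\ sig R0 <= sinh x /\ sinh x <= cosh x /\ cosh x <= kap R0 * sinh x /\ 1 <= kap R0.
Proof.
 intros H0 H. have Hs := sinh_pos' R0 H0.
 have Hsx : sinh R0 <= sinh x by (destruct (Req_dec R0 x) as [->|]; [lra| left; apply sinh_lt; lra]).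
 have Hc := cosh_le_sinh1 x ltac:(lra). have Hcs := cosh_ge_sinh x.
 have Hi : 0 < / sinh R0 by apply Rinv_0_lt_compat.
 unfold sig, kap. repeat split; try lra.
 have : 1 <= / sinh R0 * sinh x.
 { apply (Rmult_le_reg_l (sinh R0)); auto. rewrite -Rmult_assoc Rinv_r; lra. }
 nra.
Qed.

Lemma prod_le1 b c : -1 <= b <= 1 -> -1 <= c <= 1 -> -1 <= b*c <= 1.
Proof. intros Hb Hc.
 have := Rmult_le_pos (1-b) (1-c) ltac:(lra) ltac:(lra).
 have := Rmult_le_pos (1+b) (1+c) ltac:(lra) ltac:(lra).
 have := Rmult_le_pos (1-b) (1+c) ltac:(lra) ltac:(lra).
 have := Rmult_le_pos (1+b) (1-c) ltac:(lra) ltac:(lra). lra. Qed.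

Lemma one_abc a b c : -1 < a <= 1 -> -1 < b <= 1 -> -1 < c <= 1 -> 0 < 1 + a*b*c.
Proof.
 intros Ha Hb Hc.
 destruct (Rlt_dec a 0) as [Ha0|Ha0].
 - have Hp1 := prod_le1 b c ltac:(lra) ltac:(lra). have : 0 <= (-a)*(1 - b*c) by (apply Rmult_le_pos; lra). nra.
 - apply Rnot_lt_le in Ha0.
   destruct (Rle_dec 0 (b*c)) as [Hbc|Hbc]. nra.
   apply Rnot_le_lt in Hbc.
   have : -1 < b*c.
   { destruct (Rlt_dec b 0) as [Hb0|Hb0].
     - have : 0 <= (-b)*(1-c) by (apply Rmult_le_pos; lra). nra.
     - apply Rnot_lt_le in Hb0.
       have Hc0 : c < 0. { destruct (Rlt_dec c 0) as [|Hc0]; auto. apply Rnot_lt_le in Hc0. have : 0 <= b*c by (apply Rmult_le_pos; lra). lra. }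
       have : 0 <= (-c)*(1-b) by (apply Rmult_le_pos; lra). nra. }
   have : 0 <= (1-a)*(-(b*c)) by (apply Rmult_le_pos; lra). nra.
Qed.

Lemma K12_pos a b c : -1 < a <= 1 -> -1 < b <= 1 -> -1 < c <= 1 ->
  0 <= c + a*b -> 0 <= b + a*c -> 0 <= a + b*c ->
  0 < ((1 - a*a) + (c + a*b) + (b + a*c)) + ((1 - b*b) + (c + b*a) + (a + b*c)).
Proof.
 intros Ha Hb Hc H1 H2 H3.
 destruct (Rlt_dec a 1); [nra|]. destruct (Rlt_dec b 1); [nra|].
 have -> : a = 1 by lra. have -> : b = 1 by lra. lra.
Qed.

Definition Lam R0 := 3 / sig R0 ^ 2 + 4 + 12 * kap R0 ^ 2.

Definition tri_hyp R0 x y z a b c :=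
  0 < R0 /\ R0 <= x /\ R0 <= y /\ R0 <= z /\ -1 < a <= 1 /\ -1 < b <= 1 /\ -1 < c <= 1 /\
  0 <= c + a*b /\ 0 <= b + a*c /\ 0 <= a + b*c.

Ltac pos := repeat match goal with |- 0 <= _ * _ => apply Rmult_le_pos | |- 0 <= _ ^ _ => apply pow_le end; try lra.

Lemma sqrt_sq_mul k S : 0 <= k -> 0 <= S -> sqrt (k * S^2) = sqrt k * S.
Proof. intros. rewrite sqrt_mult //. 2: pos. rewrite /= Rmult_1_r sqrt_square //. Qed.

Lemma Delta_bounds R0 x y z a b c : tri_hyp R0 x y z a b c ->
  2*(1+a*b*c) * (sinh x * sinh y * sinh z)^2 <= Dang x y z a b c <= Lam R0 * (sinh x * sinh y * sinh z)^2.
Proof.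
 intros (H0 & Hx & Hy & Hz & Ha & Hb & Hc & H1 & H2 & H3).
 have [s0 [sx [hx [kx k1]]]] := rad_facts R0 x H0 Hx.
 have [_ [sy [hy [ky _]]]] := rad_facts R0 y H0 Hy.
 have [_ [sz [hz [kz _]]]] := rad_facts R0 z H0 Hz.
 have Habc := one_abc a b c Ha Hb Hc.
 rewrite PDelta.
 move: s0 sx hx kx k1 sy hy ky sz hz kz. unfold Lam.
 set σ := sig R0. set κ := kap R0.
 set Sx := sinh x. set Sy := sinh y. set Sz := sinh z. set Cx := cosh x. set Cy := cosh y. set Cz := cosh z.
 intros s0 sx hx kx k1 sy hy ky sz hz kz.
 have a2 : 0 <= 1 - a*a by (have := Rmult_le_pos (1-a) (1+a) ltac:(lra) ltac:(lra); nra).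
 have b2 : 0 <= 1 - b*b by (have := Rmult_le_pos (1-b) (1+b) ltac:(lra) ltac:(lra); nra).
 have c2 : 0 <= 1 - c*c by (have := Rmult_le_pos (1-c) (1+c) ltac:(lra) ltac:(lra); nra).
 have T1 : 0 <= Sy^2*Sz^2*(1-c*c) by pos.
 have T2 : 0 <= Sx^2*Sz^2*(1-b*b) by pos.
 have T3 : 0 <= Sx^2*Sy^2*(1-a*a) by pos.
 have T5 : 0 <= 2*Sx^2*Cy*Sy*Cz*Sz*(c+a*b) by pos.
 have T6 : 0 <= 2*Cx*Sx*Sy^2*Cz*Sz*(b+a*c) by pos.
 have T7 : 0 <= 2*Cx*Sx*Cy*Sy*Sz^2*(a+b*c) by pos.
 split. { replace ((Sx*Sy*Sz)^2) with (Sx^2*Sy^2*Sz^2) by ring. lra. }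
 have q : forall s, σ <= s -> 1 <= s^2 / σ^2.
 { intros s Hs. apply (Rmult_le_reg_r (σ^2)). pos. nra. field_simplify. nra. nra. }
 have U1 : Sy^2*Sz^2*(1-c*c) <= (Sx*Sy*Sz)^2 / σ^2.
 { have Q1 := q _ sx. have Q2 : 0 <= Sy^2*Sz^2 by pos.
   have Q3 : Sy^2*Sz^2*(1-c*c) <= Sy^2*Sz^2 by nra.
   replace ((Sx*Sy*Sz)^2/σ^2) with (Sy^2*Sz^2*(Sx^2/σ^2)) by (field; lra).
   have : 0 <= Sy^2*Sz^2 by pos. nra. }
 have U2 : Sx^2*Sz^2*(1-b*b) <= (Sx*Sy*Sz)^2 / σ^2.
 { have := q _ sy. intros. replace ((Sx*Sy*Sz)^2/σ^2) with (Sx^2*Sz^2*(Sy^2/σ^2)) by (field; lra).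
   have : 0 <= Sx^2*Sz^2 by pos. nra. }
 have U3 : Sx^2*Sy^2*(1-a*a) <= (Sx*Sy*Sz)^2 / σ^2.
 { have := q _ sz. intros. replace ((Sx*Sy*Sz)^2/σ^2) with (Sx^2*Sy^2*(Sz^2/σ^2)) by (field; lra).
   have : 0 <= Sx^2*Sy^2 by pos. nra. }
 have U4 : 2*(Sx^2*Sy^2*Sz^2)*(1+a*b*c) <= 4 * (Sx*Sy*Sz)^2.
 { have := prod_le1 a b ltac:(lra) ltac:(lra). intros. have := prod_le1 (a*b) c ltac:(lra) ltac:(lra). intros.
   have : 0 <= Sx^2*Sy^2*Sz^2 by pos. nra. }
 have CC : forall u v w t, 0 <= u -> u <= κ * v -> 0 <= w -> w <= κ * t -> u*w <= κ^2 * (v*t).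
 { intros u v w t Hu Huv Hw Hwt. have := Rmult_le_compat _ _ _ _ Hu Hw Huv Hwt. intros. nra. }
 have Cxs : Cx*Sx <= κ * Sx^2 by nra.
 have Cys : Cy*Sy <= κ * Sy^2 by nra.
 have Czs : Cz*Sz <= κ * Sz^2 by nra.
 have Hab := prod_le1 a b ltac:(lra) ltac:(lra).
 have Hac := prod_le1 a c ltac:(lra) ltac:(lra).
 have Hbc := prod_le1 b c ltac:(lra) ltac:(lra).
 have U5 : 2*Sx^2*Cy*Sy*Cz*Sz*(c+a*b) <= 4*κ^2 * (Sx*Sy*Sz)^2.
 { have W := CC (Cy*Sy) (Sy^2) (Cz*Sz) (Sz^2) ltac:(pos) Cys ltac:(pos) Czs.
   have W2 : 0 <= Sx^2 by pos.
   have W3 : Sx^2*((Cy*Sy)*(Cz*Sz)) <= Sx^2*(κ^2*(Sy^2*Sz^2)) by (apply Rmult_le_compat_l; lra).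
   have W4 : 0 <= Sx^2*((Cy*Sy)*(Cz*Sz)) by pos.
   replace (2*Sx^2*Cy*Sy*Cz*Sz*(c+a*b)) with (2*(Sx^2*((Cy*Sy)*(Cz*Sz)))*(c+a*b)) by ring.
   replace (4*κ^2 * (Sx*Sy*Sz)^2) with (2*(Sx^2*(κ^2*(Sy^2*Sz^2)))*2) by ring. nra. }
 have U6 : 2*Cx*Sx*Sy^2*Cz*Sz*(b+a*c) <= 4*κ^2 * (Sx*Sy*Sz)^2.
 { have W := CC (Cx*Sx) (Sx^2) (Cz*Sz) (Sz^2) ltac:(pos) Cxs ltac:(pos) Czs.
   have W2 : 0 <= Sy^2 by pos.
   have W3 : Sy^2*((Cx*Sx)*(Cz*Sz)) <= Sy^2*(κ^2*(Sx^2*Sz^2)) by (apply Rmult_le_compat_l; lra).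
   have W4 : 0 <= Sy^2*((Cx*Sx)*(Cz*Sz)) by pos.
   replace (2*Cx*Sx*Sy^2*Cz*Sz*(b+a*c)) with (2*(Sy^2*((Cx*Sx)*(Cz*Sz)))*(b+a*c)) by ring.
   replace (4*κ^2 * (Sx*Sy*Sz)^2) with (2*(Sy^2*(κ^2*(Sx^2*Sz^2)))*2) by ring. nra. }
 have U7 : 2*Cx*Sx*Cy*Sy*Sz^2*(a+b*c) <= 4*κ^2 * (Sx*Sy*Sz)^2.
 { have W := CC (Cx*Sx) (Sx^2) (Cy*Sy) (Sy^2) ltac:(pos) Cxs ltac:(pos) Cys.
   have W2 : 0 <= Sz^2 by pos.
   have W3 : Sz^2*((Cx*Sx)*(Cy*Sy)) <= Sz^2*(κ^2*(Sx^2*Sy^2)) by (apply Rmult_le_compat_l; lra).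
   have W4 : 0 <= Sz^2*((Cx*Sx)*(Cy*Sy)) by pos.
   replace (2*Cx*Sx*Cy*Sy*Sz^2*(a+b*c)) with (2*(Sz^2*((Cx*Sx)*(Cy*Sy)))*(a+b*c)) by ring.
   replace (4*κ^2 * (Sx*Sy*Sz)^2) with (2*(Sz^2*(κ^2*(Sx^2*Sy^2)))*2) by ring. nra. }
 have E : (3 / σ ^ 2 + 4 + 12 * κ ^ 2) * (Sx * Sy * Sz) ^ 2 =
   3 * ((Sx*Sy*Sz)^2/σ^2) + 4 * (Sx*Sy*Sz)^2 + 3 * (4*κ^2 * (Sx*Sy*Sz)^2) by (field; lra).
 rewrite E.
 replace (2 * Sx ^ 2 * Sy ^ 2 * Sz ^ 2 * (1 + a * b * c)) with (2*(Sx^2*Sy^2*Sz^2)*(1+a*b*c)) by ring.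
 lra.
Qed.

Lemma frac_le n d N D : 0 <= n <= N -> 0 < D <= d -> n / d <= N / D.
Proof. intros [H1 H2] [H3 H4]. unfold Rdiv.
 apply Rmult_le_compat; try lra. left; apply Rinv_0_lt_compat; lra.
 apply Rinv_le_contravar; lra. Qed.

Lemma X_bounds R0 x y a : 0 < R0 -> R0 <= x -> R0 <= y -> -1 < a <= 1 ->
  (1+a)*(sinh x * sinh y) <= Xf x y a - 1 /\ Xf x y a + 1 <= 3 * (cosh x * cosh y).
Proof. intros H0 Hx Hy Ha.
 have [s0 [sx [hx [kx k1]]]] := rad_facts R0 x H0 Hx.
 have [_ [sy [hy [ky _]]]] := rad_facts R0 y H0 Hy.
 split. apply Xf_gt1; lra.
 have [G1 _] := hh_ge x y. unfold Xf.
 have : sinh x * sinh y <= cosh x * cosh y by (apply Rmult_le_compat; lra).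
 have : 0 <= sinh x * sinh y by (apply Rmult_le_pos; lra). nra.
Qed.

Definition rho a b c := sqrt (2*(1+a*b*c)).
Definition UB R0 a b c := 5 * kap R0 ^3 / ((1+a)^2 * rho a b c * sig R0 ^2).
Definition UD R0 a b c := 5 * kap R0 ^3 / ((1+a) * rho a b c) + 5 * kap R0 ^3 / ((1+b) * rho a b c).
Definition LD R0 a b c :=
  (((1 - a*a) + (c + a*b) + (b + a*c)) + ((1 - b*b) + (c + b*a) + (a + b*c))) / (3 * sqrt (Lam R0) * kap R0 ^2).

Lemma M_bounds R0 x y z a b c : tri_hyp R0 x y z a b c ->
  (sinh x * sinh y * sinh z) * ((1 - a*a) + (c + a*b) + (b + a*c)) <= Mf x y z a b c <=
  5 * (cosh x * cosh y * cosh z).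
Proof.
 intros (H0 & Hx & Hy & Hz & Ha & Hb & Hc & H1 & H2 & H3).
 have [s0 [sx [hx [kx k1]]]] := rad_facts R0 x H0 Hx.
 have [_ [sy [hy [ky _]]]] := rad_facts R0 y H0 Hy.
 have [_ [sz [hz [kz _]]]] := rad_facts R0 z H0 Hz.
 have a2 : 0 <= 1 - a*a by (have := Rmult_le_pos (1-a) (1+a) ltac:(lra) ltac:(lra); nra).
 have Hab := prod_le1 a b ltac:(lra) ltac:(lra).
 have Hac := prod_le1 a c ltac:(lra) ltac:(lra).
 unfold Mf.
 set Sx := sinh x in sx hx kx *. set Sy := sinh y in sy hy ky *. set Sz := sinh z in sz hz kz *.
 set Cx := cosh x in hx kx *. set Cy := cosh y in hy ky *. set Cz := cosh z in hz kz *.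
 have A1 : Sx*Sy*Sz <= Sx*Sy*Cz by (apply Rmult_le_compat_l; pos).
 have A2 : Sx*Sy*Sz <= Sx*Cy*Sz by (apply Rmult_le_compat_r; pos; apply Rmult_le_compat_l; pos).
 have A3 : Sx*Sy*Sz <= Cx*Sy*Sz by (apply Rmult_le_compat_r; pos; apply Rmult_le_compat_r; pos).
 have B1 : Sx*Sy*Cz <= Cx*Cy*Cz by (apply Rmult_le_compat_r; pos; apply Rmult_le_compat; pos).
 have B2 : Sx*Cy*Sz <= Cx*Cy*Cz by (apply Rmult_le_compat; pos; apply Rmult_le_compat; pos).
 have B3 : Cx*Sy*Sz <= Cx*Cy*Cz by (apply Rmult_le_compat; pos; apply Rmult_le_compat; pos).
 have P0 : 0 <= Sx*Sy*Sz by pos.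
 split; nra.
Qed.

Lemma sqrtD_bounds R0 x y z a b c : tri_hyp R0 x y z a b c ->
  0 < rho a b c /\ rho a b c * (sinh x * sinh y * sinh z) <= sqrt (Dang x y z a b c) <=
  sqrt (Lam R0) * (sinh x * sinh y * sinh z).
Proof.
 intro T. have [DL DU] := Delta_bounds R0 x y z a b c T.
 move: (T) => [H0 [Hx [Hy [Hz [Ha [Hb [Hc _]]]]]]].
 have [s0 [sx _]] := rad_facts R0 x H0 Hx.
 have [_ [sy _]] := rad_facts R0 y H0 Hy.
 have [_ [sz _]] := rad_facts R0 z H0 Hz.
 have Habc := one_abc a b c Ha Hb Hc.
 have S0 : 0 <= sinh x * sinh y * sinh z by pos.
 split. apply sqrt_lt_R0; lra.
 unfold rho. rewrite -!sqrt_sq_mul //; try lra.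
 2: { unfold Lam. have : 0 < sig R0 ^2 by (apply pow_lt; lra). intros. have : 0 <= 3 / sig R0 ^ 2 by (apply Rlt_le, Rdiv_lt_0_compat; lra). have : 0 <= 12 * kap R0^2 by (have := pow2_ge_0 (kap R0); lra). lra. }
 split; apply sqrt_le_1_alt; lra.
Qed.

Lemma B_bound R0 x y z a b c : tri_hyp R0 x y z a b c ->
  0 <= sinh y * (sinh x * Mf x y z a b c / ((Xf x y a * Xf x y a - 1) * sqrt (Dang x y z a b c))) <= UB R0 a b c.
Proof.
 intro T. have [ML MU] := M_bounds R0 x y z a b c T.
 have [r0 [SL SU]] := sqrtD_bounds R0 x y z a b c T.
 move: (T) => [H0 [Hx [Hy [Hz [Ha [Hb [Hc [H1 [H2 H3]]]]]]]]].
 have [s0 [sx [hx [kx k1]]]] := rad_facts R0 x H0 Hx.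
 have [_ [sy [hy [ky _]]]] := rad_facts R0 y H0 Hy.
 have [_ [sz [hz [kz _]]]] := rad_facts R0 z H0 Hz.
 have [XL XU] := X_bounds R0 x y a H0 Hx Hy Ha.
 have a2 : 0 <= 1 - a*a by (have := Rmult_le_pos (1-a) (1+a) ltac:(lra) ltac:(lra); nra).
 have Hab := prod_le1 a b ltac:(lra) ltac:(lra).
 have Hac := prod_le1 a c ltac:(lra) ltac:(lra).
 move: ML MU SL SU XL XU. unfold UB.
 set σ := sig R0 in s0 sx sy sz *. set κ := kap R0 in kx ky kz k1 *. set ρ := rho a b c in r0 *.
 set M := Mf x y z a b c. set X := Xf x y a. set sD := sqrt (Dang x y z a b c).
 set Sx := sinh x in sx hx kx *. set Sy := sinh y in sy hy ky *. set Sz := sinh z in sz hz kz *.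
 set Cx := cosh x in hx kx *. set Cy := cosh y in hy ky *. set Cz := cosh z in hz kz *.
 intros ML MU SL SU XL XU.
 have S0 : 0 < Sx*Sy*Sz by (apply Rmult_lt_0_compat; [apply Rmult_lt_0_compat|]; lra).
 have K0 : 0 <= (1 - a*a) + (c + a*b) + (b + a*c) by lra.
 have M0 : 0 <= M by (have := Rmult_le_pos _ _ (Rlt_le _ _ S0) K0; lra).
 have XY0 : 0 < (1+a)*(Sx*Sy) by (apply Rmult_lt_0_compat; [lra| apply Rmult_lt_0_compat; lra]).
 have X2 : ((1+a)*(Sx*Sy))^2 <= X*X - 1.
 { replace (X*X-1) with ((X-1)*(X+1)) by ring. rewrite /= Rmult_1_r. apply Rmult_le_compat; lra. }
 have sD0 : 0 < sD by (have := Rmult_lt_0_compat _ _ r0 S0; lra).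
 replace (Sy * (Sx * M / ((X * X - 1) * sD))) with ((Sx*Sy*M) / ((X*X-1)*sD)) by (field; split; nra).
 have N0 : 0 <= Sx*Sy*M by pos.
 split. apply Rdiv_le_0_compat => //. apply Rmult_lt_0_compat; nra.
 apply Rle_trans with ((Sx*Sy*(5*(Cx*Cy*Cz))) / (((1+a)*(Sx*Sy))^2 * (ρ * (Sx*Sy*Sz)))).
 { apply frac_le. split => //. apply Rmult_le_compat_l; pos.
   split. apply Rmult_lt_0_compat. apply pow_lt; lra. apply Rmult_lt_0_compat; lra.
   apply Rmult_le_compat; try lra. apply pow_le; lra. apply Rlt_le, Rmult_lt_0_compat; lra. }
 have Hc3 : Cx*Cy*Cz <= κ^3 * (Sx*Sy*Sz).
 { replace (κ^3 * (Sx*Sy*Sz)) with ((κ*Sx)*(κ*Sy)*(κ*Sz)) by ring.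
   apply Rmult_le_compat; try lra. pos. apply Rmult_le_compat; lra. }
 have Hss : σ^2 <= Sx*Sy by (rewrite /= Rmult_1_r; apply Rmult_le_compat; lra).
 have s20 : 0 < σ^2 by (apply pow_lt; lra).
 replace (Sx*Sy*(5*(Cx*Cy*Cz)) / (((1+a)*(Sx*Sy))^2 * (ρ*(Sx*Sy*Sz))))
   with ((5*(Cx*Cy*Cz)) / (((1+a)^2*ρ) * ((Sx*Sy)*(Sx*Sy*Sz)))) by (field; repeat split; lra).
 replace (5 * κ ^ 3 / ((1 + a) ^ 2 * ρ * σ ^ 2)) with ((5*(κ^3*(Sx*Sy*Sz))) / (((1+a)^2*ρ) * (σ^2*(Sx*Sy*Sz)))) by (field; repeat split; lra).
 apply frac_le. split. pos. lra.
 have : 0 < (1+a)^2*ρ by (apply Rmult_lt_0_compat; [apply pow_lt|]; lra).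
 intros. split. apply Rmult_lt_0_compat => //. apply Rmult_lt_0_compat; lra.
 apply Rmult_le_compat_l. lra. apply Rmult_le_compat_r; lra.
Qed.

Lemma T_bounds R0 x y z a b c : tri_hyp R0 x y z a b c ->
  ((1 - a*a) + (c + a*b) + (b + a*c)) / (3 * sqrt (Lam R0) * kap R0 ^2)
   <= sinh x * sinh y * Mf x y z a b c / ((Xf x y a + 1) * sqrt (Dang x y z a b c))
   <= 5 * kap R0 ^3 / ((1+a) * rho a b c).
Proof.
 intro T. have [ML MU] := M_bounds R0 x y z a b c T.
 have [r0 [SL SU]] := sqrtD_bounds R0 x y z a b c T.
 move: (T) => [H0 [Hx [Hy [Hz [Ha [Hb [Hc [H1 [H2 H3]]]]]]]]].
 have [s0 [sx [hx [kx k1]]]] := rad_facts R0 x H0 Hx.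
 have [_ [sy [hy [ky _]]]] := rad_facts R0 y H0 Hy.
 have [_ [sz [hz [kz _]]]] := rad_facts R0 z H0 Hz.
 have [XL XU] := X_bounds R0 x y a H0 Hx Hy Ha.
 have a2 : 0 <= 1 - a*a by (have := Rmult_le_pos (1-a) (1+a) ltac:(lra) ltac:(lra); nra).
 have Hab := prod_le1 a b ltac:(lra) ltac:(lra).
 have Hac := prod_le1 a c ltac:(lra) ltac:(lra).
 have L0 : 0 < sqrt (Lam R0).
 { apply sqrt_lt_R0. unfold Lam. have : 0 < sig R0 ^2 by (apply pow_lt; lra). intros. have : 0 <= 3 / sig R0 ^ 2 by (apply Rlt_le, Rdiv_lt_0_compat; lra). have : 0 <= 12 * kap R0^2 by (have := pow2_ge_0 (kap R0); lra). lra. }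
 move: ML MU SL SU XL XU L0.
 set σ := sig R0 in s0 sx sy sz *. set κ := kap R0 in kx ky kz k1 *. set ρ := rho a b c in r0 *.
 set M := Mf x y z a b c. set X := Xf x y a. set sD := sqrt (Dang x y z a b c). set λ := sqrt (Lam R0).
 set Sx := sinh x in sx hx kx *. set Sy := sinh y in sy hy ky *. set Sz := sinh z in sz hz kz *.
 set Cx := cosh x in hx kx *. set Cy := cosh y in hy ky *. set Cz := cosh z in hz kz *.
 set K1 := (1 - a*a) + (c + a*b) + (b + a*c).
 intros ML MU SL SU XL XU L0.
 have S0 : 0 < Sx*Sy*Sz by (apply Rmult_lt_0_compat; [apply Rmult_lt_0_compat|]; lra).
 have K0 : 0 <= K1 by (unfold K1; lra).
 have M0 : 0 <= M by (have := Rmult_le_pos _ _ (Rlt_le _ _ S0) K0; lra).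
 have XY0 : 0 < (1+a)*(Sx*Sy) by (apply Rmult_lt_0_compat; [lra| apply Rmult_lt_0_compat; lra]).
 have sD0 : 0 < sD by (have := Rmult_lt_0_compat _ _ r0 S0; lra).
 have Hc3 : Cx*Cy*Cz <= κ^3 * (Sx*Sy*Sz).
 { replace (κ^3 * (Sx*Sy*Sz)) with ((κ*Sx)*(κ*Sy)*(κ*Sz)) by ring.
   apply Rmult_le_compat; try lra. pos. apply Rmult_le_compat; lra. }
 have Hc2 : Cx*Cy <= κ^2 * (Sx*Sy).
 { replace (κ^2 * (Sx*Sy)) with ((κ*Sx)*(κ*Sy)) by ring. apply Rmult_le_compat; lra. }
 have SS : 0 < Sx*Sy by (apply Rmult_lt_0_compat; lra).
 have CC : 0 < Cx*Cy by (apply Rmult_lt_0_compat; lra).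
 have N0 : 0 <= Sx*Sy*M by pos.
 split.
 - apply Rle_trans with ((Sx*Sy*((Sx*Sy*Sz)*K1)) / ((3*(Cx*Cy)) * (λ*(Sx*Sy*Sz)))).
   + replace (Sx*Sy*((Sx*Sy*Sz)*K1) / ((3*(Cx*Cy)) * (λ*(Sx*Sy*Sz)))) with ((K1 * (Sx*Sy)) / (3*λ*(Cx*Cy))) by (field; repeat split; lra).
     replace (K1 / (3 * λ * κ ^ 2)) with ((K1 * (Sx*Sy)) / (3*λ*(κ^2*(Sx*Sy)))) by (field; repeat split; lra).
     apply frac_le. split. pos. lra. split. apply Rmult_lt_0_compat; lra.
     apply Rmult_le_compat_l; lra.
   + apply frac_le. split. pos. apply Rmult_le_compat_l; lra.
     split. apply Rmult_lt_0_compat; lra. apply Rmult_le_compat; lra.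
 - apply Rle_trans with ((Sx*Sy*(5*(Cx*Cy*Cz))) / (((1+a)*(Sx*Sy)) * (ρ * (Sx*Sy*Sz)))).
   + apply frac_le. split => //. apply Rmult_le_compat_l; pos.
     split. apply Rmult_lt_0_compat; [exact XY0 | apply Rmult_lt_0_compat; lra]. apply Rmult_le_compat; try lra; apply Rlt_le, Rmult_lt_0_compat; lra.
   + replace (Sx*Sy*(5*(Cx*Cy*Cz)) / (((1+a)*(Sx*Sy)) * (ρ*(Sx*Sy*Sz))))
       with ((5*(Cx*Cy*Cz)) / (((1+a)*ρ) * (Sx*Sy*Sz))) by (field; repeat split; lra).
     replace (5 * κ ^ 3 / ((1 + a) * ρ)) with ((5*(κ^3*(Sx*Sy*Sz))) / (((1+a)*ρ) * (Sx*Sy*Sz))) by (field; repeat split; lra).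
     apply frac_le. split. pos. lra. split. apply Rmult_lt_0_compat => //. apply Rmult_lt_0_compat; lra. lra.
Qed.

Lemma D_bound R0 x y z a b c : tri_hyp R0 x y z a b c ->
  LD R0 a b c <=
  sinh x * ((sinh y * Mf x y z a b c / (Xf x y a + 1) + sinh z * Mf x z y b a c / (Xf x z b + 1)) / sqrt (Dang x y z a b c))
  <= UD R0 a b c.
Proof.
 intro T.
 have T' : tri_hyp R0 x z y b a c.
 { move: T => [H0 [Hx [Hy [Hz [Ha [Hb [Hc [H1 [H2 H3]]]]]]]]]. repeat split; lra. }
 have [A1 A2] := T_bounds R0 x y z a b c T.
 have [B1 B2] := T_bounds R0 x z y b a c T'.
 rewrite /Dang in B1 B2. rewrite (Xf_sym z y c) in B1 B2.
 have E : Df (Xf x z b) (Xf x y a) (Xf y z c) = Dang x y z a b c by (rewrite /Dang /Df; ring).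
 rewrite E in B1 B2. rewrite /Dang in A1 A2 B1 B2 *.
 move: (T) => [H0 [Hx [Hy [Hz [Ha [Hb [Hc [H1 [H2 H3]]]]]]]]].
 have [r0 [SL _]] := sqrtD_bounds R0 x y z a b c T.
 have [s0 [sx _]] := rad_facts R0 x H0 Hx.
 have [_ [sy _]] := rad_facts R0 y H0 Hy.
 have [_ [sz _]] := rad_facts R0 z H0 Hz.
 have S0 : 0 < sinh x * sinh y * sinh z by (apply Rmult_lt_0_compat; [apply Rmult_lt_0_compat|]; lra).
 have sD0 : 0 < sqrt (Df (Xf x y a) (Xf x z b) (Xf y z c)) by (rewrite /Dang in SL; nra).
 have [XL _] := X_bounds R0 x y a H0 Hx Hy Ha.
 have [YL _] := X_bounds R0 x z b H0 Hx Hz Hb.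
 have XY : 0 < (1+a)*(sinh x * sinh y) by (apply Rmult_lt_0_compat; [lra|apply Rmult_lt_0_compat; lra]).
 have XZ : 0 < (1+b)*(sinh x * sinh z) by (apply Rmult_lt_0_compat; [lra|apply Rmult_lt_0_compat; lra]).
 have X0 : 0 < Xf x y a + 1 by lra.
 have Y0 : 0 < Xf x z b + 1 by lra.
 match goal with |- _ <= ?v <= _ => replace v with
   (sinh x * sinh y * Mf x y z a b c / ((Xf x y a + 1) * sqrt (Df (Xf x y a) (Xf x z b) (Xf y z c))) +
    sinh x * sinh z * Mf x z y b a c / ((Xf x z b + 1) * sqrt (Df (Xf x y a) (Xf x z b) (Xf y z c)))) by (field; lra) end.
 unfold LD, UD. split.
 - rewrite Rdiv_plus_distr. lra.
 - replace (rho b a c) with (rho a b c) in B2 by (unfold rho; f_equal; ring). lra.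
Qed.

Lemma Rplus_assoc' : associative Rplus. Proof. intros a b c; ring. Qed.
HB.instance Definition _ := Monoid.isComLaw.Build R 0 Rplus Rplus_assoc' Rplus_comm Rplus_0_l.

Lemma big_Rle (I : finType) (P : pred I) (f g : I -> R) :
  (forall i, P i -> f i <= g i) -> \big[Rplus/0]_(i | P i) f i <= \big[Rplus/0]_(i | P i) g i.
Proof. intro H. apply: (big_ind2 (fun a b => a <= b)) => //. lra. intros; lra. Qed.

Lemma big_Rge0 (I : finType) (P : pred I) (f : I -> R) :
  (forall i, P i -> 0 <= f i) -> 0 <= \big[Rplus/0]_(i | P i) f i.
Proof. intro H. apply: (big_ind (fun a => 0 <= a)) => //. lra. intros; lra. Qed.

Lemma big_Rsingle (I : finType) (P : pred I) (f : I -> R) i0 :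
  (forall i, P i -> 0 <= f i) -> P i0 -> f i0 <= \big[Rplus/0]_(i | P i) f i.
Proof. intros H Hi. rewrite (bigD1 i0) //=. have : 0 <= \big[Rplus/0]_(i | P i && (i != i0)) f i.
 { apply big_Rge0 => i /andP [Hp _]. auto. } lra. Qed.

Lemma big_Rsub (I : finType) (P : pred I) (f : I -> R) :
  (forall i, 0 <= f i) -> \big[Rplus/0]_(i | P i) f i <= \big[Rplus/0]_i f i.
Proof. intro H. rewrite big_mkcond /=. apply big_Rle => i _. case: (P i) => /=; [apply Rle_refl | apply H]. Qed.

Lemma is_derive_big (I : finType) (P : pred I) (f : I -> R -> R) (df : I -> R) x :
  (forall i, P i -> is_derive (f i) x (df i)) ->
  is_derive (fun t => \big[Rplus/0]_(i | P i) f i t) x (\big[Rplus/0]_(i | P i) df i).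
Proof.
 intro H. rewrite unlock. elim: (index_enum I) => [|a s IH] /=.
 - apply: is_derive_const.
 - case HP: (P a).
   + have := is_derive_plus _ _ _ _ _ (H a HP) IH. by [].
   + exact IH.
Qed.

Lemma cos_bnd x : 0 <= x < PI -> -1 < cos x <= 1.
Proof. intro H. have := COS_bound x. intros [_ H1]. split => //.
 have Hc : 0 < cos (x/2) by (apply cos_gt_0; lra).
 replace x with (2 * (x/2)) by field. rewrite cos_2a_cos. nra. Qed.

Section Comb.
End Comb.

Lemma set3_perm N (i j k : 'I_N) :
  [/\ [set j; i; k] = [set i; j; k], [set i; k; j] = [set i; j; k], [set j; k; i] = [set i; j; k]
   & [set k; i; j] = [set i; j; k]].
Proof. split; apply/setP => x; rewrite !inE; by case: (x == i); case: (x == j); case: (x == k). Qed.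

Lemma face_distinct N (i j k : 'I_N) : #|[set i; j; k]| = 3%nat -> [/\ i != j, i != k & j != k].
Proof.
 intro H. split; apply/negP => /eqP E; subst.
 - have E : [set j; j; k] = [set j; k] by (apply/setP => x; rewrite !inE; case: (x == j); case: (x == k)).
   rewrite E cards2 in H. by case: (j != k) H.
 - have E : [set k; j; k] = [set k; j] by (apply/setP => x; rewrite !inE; case: (x == j); case: (x == k)).
   rewrite E cards2 in H. by case: (k != j) H.
 - have E : [set i; k; k] = [set i; k] by (apply/setP => x; rewrite !inE; case: (x == i); case: (x == k)).
   rewrite E cards2 in H. by case: (i != k) H.
Qed.

Lemma face_adj N (F : {set {set 'I_N}}) (i j k : 'I_N) :
  [set i; j; k] \in F -> i != j -> adjacent F i j.
Proof. intros Hf Hij. rewrite /adjacent Hij /=. apply/existsP. by exists k. Qed.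

Lemma face_hyp N (F : {set {set 'I_N}}) (Phi : 'I_N -> 'I_N -> R) R0 (r : 'I_N -> R) (i j k : 'I_N) :
  closed_surface_triangulation F -> is_weight F Phi -> star_condition F Phi -> 0 < R0 ->
  (forall m, R0 <= r m) -> [set i; j; k] \in F ->
  [/\ tri_hyp R0 (r i) (r j) (r k) (cos (Phi i j)) (cos (Phi i k)) (cos (Phi j k)),
      [/\ i != j, i != k & j != k] &
      [/\ Phi j i = Phi i j, Phi k i = Phi i k & Phi k j = Phi j k]].
Proof.
 intros Htri Hw Hs H0 Hr Hf.
 have Hc := tri_card3 Htri Hf.
 have [Hij Hik Hjk] := @face_distinct N i j k Hc.
 have [P1 P2 P3 P4] := @set3_perm N i j k.
 have Aij := @face_adj N F i j k Hf Hij.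
 have Aik : adjacent F i k by (apply (@face_adj N F i k j); [rewrite P2|]).
 have Ajk : adjacent F j k by (apply (@face_adj N F j k i); [rewrite P3|]).
 have [Sij Bij] := Hw _ _ Aij. have [Sik Bik] := Hw _ _ Aik. have [Sjk Bjk] := Hw _ _ Ajk.
 split => //.
 have Ca := cos_bnd _ Bij. have Cb := cos_bnd _ Bik. have Cc := cos_bnd _ Bjk.
 have S1 := Hs i j k Hf Hc.
 have S2 := Hs i k j ltac:(by rewrite P2) ltac:(by rewrite P2).
 have S3 := Hs j k i ltac:(by rewrite P3) ltac:(by rewrite P3).
 rewrite -Sij -Sik -Sjk in S2 S3.
 repeat split; try apply Hr; try lra.
Qed.

Lemma r_upd N (r : 'I_N -> R) (j : 'I_N) t m : (forall m, 0 < r m) ->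
  r_of_u (upd (u_of_r r) j t) m = if m == j then r1 t else r m.
Proof. intro Hr. rewrite /r_of_u /upd. case: (m == j) => //. apply (r1_u _ (Hr m)). Qed.

Lemma B_term N (Phi : 'I_N -> 'I_N -> R) R0 (r : 'I_N -> R) (i j k : 'I_N) :
  (forall m, 0 < r m) -> i != j -> j != k ->
  tri_hyp R0 (r i) (r j) (r k) (cos (Phi i j)) (cos (Phi i k)) (cos (Phi j k)) ->
  pderiv (fun w => hangle Phi (r_of_u w) i j k) (u_of_r r) j =
  sinh (r j) * (sinh (r i) * Mf (r i) (r j) (r k) (cos (Phi i j)) (cos (Phi i k)) (cos (Phi j k)) /
     ((Xf (r i) (r j) (cos (Phi i j)) * Xf (r i) (r j) (cos (Phi i j)) - 1) *
      sqrt (Dang (r i) (r j) (r k) (cos (Phi i j)) (cos (Phi i k)) (cos (Phi j k))))).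
Proof.
 intros Hr Hij Hjk T. move: T.
 set a := cos (Phi i j). set b := cos (Phi i k). set c := cos (Phi j k). move => T.
 have E : forall t, hangle Phi (r_of_u (upd (u_of_r r) j t)) i j k = angf (r i) (r1 t) (r k) a b c.
 { intro t. rewrite hangle_angf !r_upd // (negbTE Hij) eqxx eq_sym (negbTE Hjk). reflexivity. }
 rewrite /pderiv. rewrite (Derive_ext _ _ _ E).
 apply is_derive_unique.
 move: (T) => [H0 [Hx [Hy [Hz [Ha [Hb [Hc _]]]]]]].
 have [XL _] := X_bounds R0 (r i) (r j) a H0 Hx Hy Ha.
 have [YL _] := X_bounds R0 (r i) (r k) b H0 Hx Hz Hb.
 have [DL _] := Delta_bounds R0 _ _ _ _ _ _ T.
 have [s0 [sx _]] := rad_facts R0 (r i) H0 Hx.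
 have [_ [sy _]] := rad_facts R0 (r j) H0 Hy.
 have [_ [sz _]] := rad_facts R0 (r k) H0 Hz.
 have Habc := one_abc a b c Ha Hb Hc.
 have P1 : 0 < (1+a)*(sinh (r i) * sinh (r j)) by (apply Rmult_lt_0_compat; [lra|apply Rmult_lt_0_compat; lra]).
 have P2 : 0 < (1+b)*(sinh (r i) * sinh (r k)) by (apply Rmult_lt_0_compat; [lra|apply Rmult_lt_0_compat; lra]).
 have P3 : 0 < 2 * (1 + a*b*c) * (sinh (r i) * sinh (r j) * sinh (r k))^2.
 { apply Rmult_lt_0_compat. lra. apply pow_lt. apply Rmult_lt_0_compat; [apply Rmult_lt_0_compat|]; lra. }
 have Hu : u_of_r r j < 0 by apply u_of_r_neg.
 have Hr1 : r1 (u_of_r r j) = r j by apply r1_u.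
 have HD := is_derive_angf2' (r i) (r j) (r k) a b c ltac:(lra) ltac:(lra) ltac:(lra).
 rewrite -Hr1 in HD.
 have H := is_derive_comp (fun y => angf (r i) y (r k) a b c) r1 (u_of_r r j) _ _ HD (is_derive_r1 _ Hu).
 eapply is_derive_eq. exact H. rewrite /scal /= /mult /= Hr1. reflexivity.
Qed.

Definition Dval x y z a b c :=
  sinh x * ((sinh y * Mf x y z a b c / (Xf x y a + 1) + sinh z * Mf x z y b a c / (Xf x z b + 1)) / sqrt (Dang x y z a b c)).

Lemma A_face N (Phi : 'I_N -> 'I_N -> R) R0 (r : 'I_N -> R) (i j k : 'I_N) :
  (forall m, 0 < r m) -> i != j -> i != k -> j != k ->
  Phi j i = Phi i j -> Phi k i = Phi i k -> Phi k j = Phi j k ->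
  tri_hyp R0 (r i) (r j) (r k) (cos (Phi i j)) (cos (Phi i k)) (cos (Phi j k)) ->
  is_derive (fun t => harea Phi (r_of_u (upd (u_of_r r) i t)) i j k) (u_of_r r i)
    (Dval (r i) (r j) (r k) (cos (Phi i j)) (cos (Phi i k)) (cos (Phi j k))).
Proof.
 intros Hr Hij Hik Hjk S1 S2 S3 T. move: T.
 set a := cos (Phi i j). set b := cos (Phi i k). set c := cos (Phi j k). move => T.
 have E : forall t, PI - angf (r1 t) (r j) (r k) a b c - angf (r j) (r1 t) (r k) a c b - angf (r k) (r1 t) (r j) b c a
    = harea Phi (r_of_u (upd (u_of_r r) i t)) i j k.
 { have Eji : (j == i) = false by rewrite eq_sym; apply negbTE.
   have Eki : (k == i) = false by rewrite eq_sym; apply negbTE.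
   intro t. rewrite /harea !hangle_angf !r_upd // eqxx Eji Eki.
   rewrite S1 S2 S3. reflexivity. }
 move: (T) => [H0 [Hx [Hy [Hz [Ha [Hb [Hc _]]]]]]].
 have [XL _] := X_bounds R0 (r i) (r j) a H0 Hx Hy Ha.
 have [YL _] := X_bounds R0 (r i) (r k) b H0 Hx Hz Hb.
 have [ZL _] := X_bounds R0 (r j) (r k) c H0 Hy Hz Hc.
 have [DL _] := Delta_bounds R0 _ _ _ _ _ _ T.
 have [s0 [sx _]] := rad_facts R0 (r i) H0 Hx.
 have [_ [sy _]] := rad_facts R0 (r j) H0 Hy.
 have [_ [sz _]] := rad_facts R0 (r k) H0 Hz.
 have Habc := one_abc a b c Ha Hb Hc.
 have P1 : 0 < (1+a)*(sinh (r i) * sinh (r j)) by (apply Rmult_lt_0_compat; [lra|apply Rmult_lt_0_compat; lra]).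
 have P2 : 0 < (1+b)*(sinh (r i) * sinh (r k)) by (apply Rmult_lt_0_compat; [lra|apply Rmult_lt_0_compat; lra]).
 have P4 : 0 < (1+c)*(sinh (r j) * sinh (r k)) by (apply Rmult_lt_0_compat; [lra|apply Rmult_lt_0_compat; lra]).
 have P3 : 0 < 2 * (1 + a*b*c) * (sinh (r i) * sinh (r j) * sinh (r k))^2.
 { apply Rmult_lt_0_compat. lra. apply pow_lt. apply Rmult_lt_0_compat; [apply Rmult_lt_0_compat|]; lra. }
 have Hu : u_of_r r i < 0 by apply u_of_r_neg.
 have Hr1 : r1 (u_of_r r i) = r i by apply r1_u.
 have HD := area_deriv (r i) (r j) (r k) a b c ltac:(lra) ltac:(lra) ltac:(lra) ltac:(lra).
 rewrite -Hr1 in HD.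
 have H := is_derive_comp (fun x => PI - angf x (r j) (r k) a b c - angf (r j) x (r k) a c b - angf (r k) x (r j) b c a) r1 (u_of_r r i) _ _ HD (is_derive_r1 _ Hu).
 eapply is_derive_ext_eq. exact E. exact H. rewrite /scal /= /mult /= Hr1. reflexivity.
Qed.

Lemma exists_face N (F : {set {set 'I_N}}) (i : 'I_N) : closed_surface_triangulation F ->
  exists j k : 'I_N, ((j < k)%N && ([set i; j; k] \in F)).
Proof.
 intro Htri. have [f Hf Hif] := tri_cover Htri i.
 have Hc := tri_card3 Htri Hf.
 have E1 : (1 + #|f :\ i|)%N = 3%N by rewrite -Hc (cardsD1 i f) Hif.
 have H2 : #|f :\ i| == 2%N by move: E1 => /eqP; rewrite add1n eqSS.
 have [x [y [Hxy Exy]]] := (elimT (cards2P _) H2).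
 have Ef : f = [set i; x; y].
 { rewrite -(setD1K Hif) Exy. apply/setP => z. rewrite !inE. by rewrite orbA. }
 have Hxy' : (x : nat) != y by [].
 case: (ltngtP x y) => H.
 - exists x, y. by rewrite H -Ef.
 - exists y, x. rewrite H /=. have E2 : [set i; y; x] = [set i; x; y].
   { apply/setP => z. rewrite !inE. by case: (z == i); case: (z == x); case: (z == y). }
   by rewrite E2 -Ef.
 - exfalso. move: Hxy'. by rewrite H eqxx.
Qed.

Lemma LD_pos R0 a b c : 0 < R0 -> -1 < a <= 1 -> -1 < b <= 1 -> -1 < c <= 1 ->
  0 <= c + a*b -> 0 <= b + a*c -> 0 <= a + b*c -> 0 < LD R0 a b c.
Proof.
 intros H0 Ha Hb Hc H1 H2 H3. have K := K12_pos a b c Ha Hb Hc H1 H2 H3.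
 have [s0 [_ [_ [_ k1]]]] := rad_facts R0 R0 H0 (Rle_refl _).
 have L0 : 0 < sqrt (Lam R0).
 { apply sqrt_lt_R0. unfold Lam. have : 0 < sig R0 ^2 by (apply pow_lt; lra). intros. have : 0 <= 3 / sig R0 ^ 2 by (apply Rlt_le, Rdiv_lt_0_compat; lra). have : 0 <= 12 * kap R0^2 by (have := pow2_ge_0 (kap R0); lra). lra. }
 unfold LD. apply Rdiv_lt_0_compat => //. apply Rmult_lt_0_compat. lra. apply pow_lt; lra.
Qed.

Theorem theorem1p1 (N : nat) (F : {set {set 'I_N}}) (Phi : 'I_N -> 'I_N -> R)
    (R0 : R) :
  closed_surface_triangulation F ->
  is_weight F Phi ->
  star_condition F Phi ->
  0 < R0 ->
  exists a1 a2 a3 : R, 0 < a1 /\ 0 < a2 /\ 0 < a3 /\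
    forall r : 'I_N -> R, (forall i, R0 <= r i) ->
      (forall i : 'I_N, a1 <= Acoef F Phi (u_of_r r) i <= a2) /\
      (forall i j : 'I_N, adjacent F i j ->
         0 <= Bcoef F Phi (u_of_r r) i j <= a3).
Proof.
 intros Htri Hw Hs H0.
 pose UBf (i j k : 'I_N) := if [set i; j; k] \in F then UB R0 (cos (Phi i j)) (cos (Phi i k)) (cos (Phi j k)) else 0.
 pose UDf (i j k : 'I_N) := if [set i; j; k] \in F then UD R0 (cos (Phi i j)) (cos (Phi i k)) (cos (Phi j k)) else 0.
 pose LIf (i j k : 'I_N) := if [set i; j; k] \in F then / LD R0 (cos (Phi i j)) (cos (Phi i k)) (cos (Phi j k)) else 0.
 have Hc0 : forall m : 'I_N, R0 <= (fun _ => R0) m by move=> m; apply Rle_refl.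
 have FH := fun r Hr i j k Hf => @face_hyp N F Phi R0 r i j k Htri Hw Hs H0 Hr Hf.
 have LDp : forall i j k : 'I_N, [set i; j; k] \in F -> 0 < LD R0 (cos (Phi i j)) (cos (Phi i k)) (cos (Phi j k)).
 { move=> i j k Hf. have [T _ _] := FH (fun _ => R0) Hc0 _ _ _ Hf.
   move: T => [_ [_ [_ [_ [Ha [Hb [Hc [H1 [H2 H3]]]]]]]]]. by apply LD_pos. }
 have UB0 : forall i j k, 0 <= UBf i j k.
 { move=> i j k. rewrite /UBf. case Hf: ([set i; j; k] \in F); last lra.
   have [T _ _] := FH (fun _ => R0) Hc0 _ _ _ Hf.
   have [B1 B2] := B_bound _ _ _ _ _ _ _ T. lra. }
 have UD0 : forall i j k, 0 <= UDf i j k.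
 { move=> i j k. rewrite /UDf. case Hf: ([set i; j; k] \in F); last lra.
   have [T _ _] := FH (fun _ => R0) Hc0 _ _ _ Hf.
   have [B1 B2] := D_bound _ _ _ _ _ _ _ T. have := LDp i j k Hf. lra. }
 have LI0 : forall i j k, 0 <= LIf i j k.
 { move=> i j k. rewrite /LIf. case Hf: ([set i; j; k] \in F); last lra.
   have := LDp i j k Hf. intro. apply Rlt_le, Rinv_0_lt_compat. lra. }
 set SB := \big[Rplus/0]_(i : 'I_N) \big[Rplus/0]_(j : 'I_N) \big[Rplus/0]_(k : 'I_N) UBf i j k.
 set SD := \big[Rplus/0]_(i : 'I_N) \big[Rplus/0]_(j : 'I_N) \big[Rplus/0]_(k : 'I_N) UDf i j k.
 set SL := \big[Rplus/0]_(i : 'I_N) \big[Rplus/0]_(j : 'I_N) \big[Rplus/0]_(k : 'I_N) LIf i j k.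
 have SB0 : 0 <= SB by (apply big_Rge0 => i _; apply big_Rge0 => j _; apply big_Rge0 => k _; apply UB0).
 have SD0 : 0 <= SD by (apply big_Rge0 => i _; apply big_Rge0 => j _; apply big_Rge0 => k _; apply UD0).
 have SL0 : 0 <= SL by (apply big_Rge0 => i _; apply big_Rge0 => j _; apply big_Rge0 => k _; apply LI0).
 have dom : forall (G : 'I_N -> 'I_N -> 'I_N -> R), (forall i j k, 0 <= G i j k) -> forall i j k,
     G i j k <= \big[Rplus/0]_(i : 'I_N) \big[Rplus/0]_(j : 'I_N) \big[Rplus/0]_(k : 'I_N) G i j k.
 { move=> G HG i j k.
   apply Rle_trans with (\big[Rplus/0]_(k0 : 'I_N) G i j k0).
   { apply (big_Rsingle _ predT (fun k0 => G i j k0) k) => //. }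
   apply Rle_trans with (\big[Rplus/0]_(j0 : 'I_N) \big[Rplus/0]_(k0 : 'I_N) G i j0 k0).
   { apply (big_Rsingle _ predT (fun j0 => \big[Rplus/0]_(k0 : 'I_N) G i j0 k0) j) => // j0 _.
     apply big_Rge0 => ? _; apply HG. }
   apply (big_Rsingle _ predT (fun i0 => \big[Rplus/0]_(j0 : 'I_N) \big[Rplus/0]_(k0 : 'I_N) G i0 j0 k0) i) => // i0 _.
   apply big_Rge0 => ? _; apply big_Rge0 => ? _; apply HG. }
 have dom2 : forall (G : 'I_N -> 'I_N -> 'I_N -> R), (forall i j k, 0 <= G i j k) -> forall i,
     \big[Rplus/0]_(j : 'I_N) \big[Rplus/0]_(k : 'I_N) G i j k <=
     \big[Rplus/0]_(i : 'I_N) \big[Rplus/0]_(j : 'I_N) \big[Rplus/0]_(k : 'I_N) G i j k.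
 { move=> G HG i.
   apply (big_Rsingle _ predT (fun i0 => \big[Rplus/0]_(j0 : 'I_N) \big[Rplus/0]_(k0 : 'I_N) G i0 j0 k0) i) => // i0 _.
   apply big_Rge0 => ? _; apply big_Rge0 => ? _; apply HG. }
 have dom1 : forall (G : 'I_N -> 'I_N -> 'I_N -> R), (forall i j k, 0 <= G i j k) -> forall i j,
     \big[Rplus/0]_(k : 'I_N) G i j k <=
     \big[Rplus/0]_(i : 'I_N) \big[Rplus/0]_(j : 'I_N) \big[Rplus/0]_(k : 'I_N) G i j k.
 { move=> G HG i j. apply Rle_trans with (\big[Rplus/0]_(j0 : 'I_N) \big[Rplus/0]_(k : 'I_N) G i j0 k).
   apply (big_Rsingle _ predT (fun j0 => \big[Rplus/0]_(k0 : 'I_N) G i j0 k0) j) => // j0 _.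
   apply big_Rge0 => ? _; apply HG. by apply dom2. }
 exists (/ (1 + SL)), (1 + SD), (1 + SB).
 split. apply Rinv_0_lt_compat; lra. split. lra. split. lra.
 move=> r Hr.
 have Hrp : forall m, 0 < r m by move=> m; have := Hr m; lra.
 split.
 - move=> i.
   have HA : Acoef F Phi (u_of_r r) i =
     \big[Rplus/0]_(j : 'I_N) \big[Rplus/0]_(k : 'I_N | ((j < k)%N && ([set i; j; k] \in F)))
        Dval (r i) (r j) (r k) (cos (Phi i j)) (cos (Phi i k)) (cos (Phi j k)).
   { rewrite /Acoef /pderiv /star_area. apply is_derive_unique.
     apply: is_derive_big => j _. apply: is_derive_big => k /andP [_ Hf].
     have [T [Hij Hik Hjk] [S1 S2 S3]] := FH r Hr _ _ _ Hf.
     by apply (@A_face N Phi R0 r i j k). }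
   rewrite HA.
   have Dterm : forall j k : 'I_N, [set i; j; k] \in F ->
       LD R0 (cos (Phi i j)) (cos (Phi i k)) (cos (Phi j k)) <= Dval (r i) (r j) (r k) (cos (Phi i j)) (cos (Phi i k)) (cos (Phi j k))
       <= UDf i j k.
   { move=> j k Hf. have [T _ _] := FH r Hr _ _ _ Hf.
     rewrite /UDf Hf. apply D_bound with (R0 := R0). exact T. }
   split.
   + have [j0 [k0 /andP [Hjk0 Hf0]]] := @exists_face N F i Htri.
     have [DL _] := Dterm j0 k0 Hf0.
     have LD0 := LDp i j0 k0 Hf0.
     apply Rle_trans with (LD R0 (cos (Phi i j0)) (cos (Phi i k0)) (cos (Phi j0 k0))).
     { have HL : LIf i j0 k0 <= SL by apply dom.
       rewrite /LIf Hf0 in HL.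
       rewrite -(Rinv_inv (LD R0 (cos (Phi i j0)) (cos (Phi i k0)) (cos (Phi j0 k0)))).
       apply Rinv_le_contravar. apply Rinv_0_lt_compat; lra. lra. }
     apply Rle_trans with (Dval (r i) (r j0) (r k0) (cos (Phi i j0)) (cos (Phi i k0)) (cos (Phi j0 k0))) => //.
     apply Rle_trans with (\big[Rplus/0]_(k : 'I_N | ((j0 < k)%N && ([set i; j0; k] \in F)))
        Dval (r i) (r j0) (r k) (cos (Phi i j0)) (cos (Phi i k)) (cos (Phi j0 k))).
     { apply (big_Rsingle 'I_N (fun k : 'I_N => ((j0 < k)%N && ([set i; j0; k] \in F)))
          (fun k => Dval (r i) (r j0) (r k) (cos (Phi i j0)) (cos (Phi i k)) (cos (Phi j0 k))) k0).
       - move=> k /andP [_ Hf]. have [D1 _] := Dterm j0 k Hf. have := LDp i j0 k Hf. lra.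
       - by rewrite Hjk0 Hf0. }
     apply (big_Rsingle 'I_N predT (fun j : 'I_N => \big[Rplus/0]_(k : 'I_N | ((j < k)%N && ([set i; j; k] \in F)))
        Dval (r i) (r j) (r k) (cos (Phi i j)) (cos (Phi i k)) (cos (Phi j k))) j0) => // j _.
     apply big_Rge0 => k /andP [_ Hf]. have [D1 _] := Dterm j k Hf. have := LDp i j k Hf. lra.
   + apply Rle_trans with (\big[Rplus/0]_(j : 'I_N) \big[Rplus/0]_(k : 'I_N) UDf i j k); last first.
     { have := dom2 UDf UD0 i. rewrite -/SD. lra. }
     apply big_Rle => j _.
     apply Rle_trans with (\big[Rplus/0]_(k : 'I_N | ((j < k)%N && ([set i; j; k] \in F))) UDf i j k).
     { apply big_Rle => k /andP [_ Hf]. by have [_ D2] := Dterm j k Hf. }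
     apply big_Rsub => k. apply UD0.
 - move=> i j Hadj.
   have Hij : i != j by move: Hadj => /andP [].
   have HB : Bcoef F Phi (u_of_r r) i j =
     \big[Rplus/0]_(k : 'I_N | [set i; j; k] \in F)
       (sinh (r j) * (sinh (r i) * Mf (r i) (r j) (r k) (cos (Phi i j)) (cos (Phi i k)) (cos (Phi j k)) /
     ((Xf (r i) (r j) (cos (Phi i j)) * Xf (r i) (r j) (cos (Phi i j)) - 1) *
      sqrt (Dang (r i) (r j) (r k) (cos (Phi i j)) (cos (Phi i k)) (cos (Phi j k)))))).
   { rewrite /Bcoef. apply eq_bigr => k Hf.
     have [T [_ _ Hjk] _] := FH r Hr _ _ _ Hf.
     by apply B_term with (R0 := R0). }
   rewrite HB. split.
   + apply big_Rge0 => k Hf. have [T _ _] := FH r Hr _ _ _ Hf.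
     have [B1 _] := B_bound _ _ _ _ _ _ _ T. exact B1.
   + apply Rle_trans with (\big[Rplus/0]_(k : 'I_N | [set i; j; k] \in F) UBf i j k).
     { apply big_Rle => k Hf. have [T _ _] := FH r Hr _ _ _ Hf.
       have [_ B2] := B_bound _ _ _ _ _ _ _ T. by rewrite /UBf Hf. }
     apply Rle_trans with (\big[Rplus/0]_(k : 'I_N) UBf i j k). { apply big_Rsub => k. apply UB0. }
     have := dom1 UBf UB0 i j. rewrite -/SB. lra.
Qed.
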